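(* Let $d,n\in\mathbb{N}$ be such that $h_c(d,n)$ is finite (defined). For every $\alpha\in(0,1)$ there exists $\beta=\beta(\alpha,h_c(d,n))\in(0,1)$ such that the following holds: for any finite family $\mathcal{F}$ of axis-parallel boxes in $\mathbb{R}^d$, if at least an $\alpha$ fraction of all $h_c(d,n)$-element subfamilies of $\mathcal{F}$ are $n$-pierceable, then there exists a subfamily of $\mathcal{F}$ of size at least $\beta|\mathcal{F}|$ which is $n$-pierceable.
   Context: An axis-parallel box in $\mathbb{R}^d$ is a set $[\alpha_1,\beta_1]\times\dots\times[\alpha_d,\beta_d]$ with $\alpha_j\le\beta_j$. A family $\mathcal{F}$ is $n$-pierceable if there is $A\subseteq\mathbb{R}^d$, $|A|\le n$, meeting every member of $\mathcal{F}$. Given families $\mathcal{F}_1,\dots,\mathcal{F}_m$, a colorful $t$-tuple is a tuple $(C_1,\dots,C_t)$ with $C_j\in\mathcal{F}_{i_j}$ for pairwise distinct indices $i_1,\dots,i_t\in[m]$. $h_c(d,n)$ denotes the smallest positive integer $h$ such that whenever $\mathcal{F}_1,\dots,\mathcal{F}_h$ are collections of axis-parallel boxes in $\mathbb{R}^d$ with every colorful $h$-tuple $n$-pierceable, some $\mathcal{F}_i$ is $n$-pierceable (e.g. $h_c(1,n)=n+1$, $h_c(d,2)=3d$). *)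

(* Defs.v *)
From HB Require Import structures.
From mathcomp Require Import all_boot all_order all_algebra.
From mathcomp Require Import boolp reals.
Set Implicit Arguments. Unset Strict Implicit. Unset Printing Implicit Defensive.
Import Order.TTheory GRing.Theory Num.Theory.
Local Open Scope ring_scope.

Definition point (R : numDomainType) (d : nat) := 'I_d -> R.

Record box (R : numDomainType) (d : nat) := Box {
  lo : 'I_d -> R;
  hi : 'I_d -> R;
  box_ok : forall j, lo j <= hi j }.

Definition in_box (R : numDomainType) (d : nat) (x : point R d) (B : box R d) : Prop :=
  forall j, lo B j <= x j <= hi B j.

Definition family (R : numDomainType) (d : nat) := box R d -> Prop.

(* F is n-pierceable: some set A of at most n points meets every member of F.
   A is given as an n-indexed list of points (repetitions allowed, so |A| <= n). *)
Definition pierceable (R : numDomainType) (d n : nat) (F : family R d) : Prop :=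
  exists p : 'I_n -> point R d, forall B, F B -> exists i, in_box (p i) B.

Definition tuple_family (R : numDomainType) (d t : nat) (C : 'I_t -> box R d)
  : family R d := fun B => exists j, B = C j.

Definition colorful (R : numDomainType) (d m t : nat) (F : 'I_m -> family R d)
  (C : 'I_t -> box R d) : Prop :=
  exists idx : 'I_t -> 'I_m, injective idx /\ forall j, F (idx j) (C j).

Definition colorful_helly (R : numDomainType) (d n h : nat) : Prop :=
  forall F : 'I_h -> family R d,
    (forall C : 'I_h -> box R d, colorful F C -> pierceable n (tuple_family C)) ->
    exists i, pierceable n (F i).

(* h = h_c(d,n): the smallest positive integer with the colorful Helly property
   (in particular h_c(d,n) is defined/finite). *)
Definition is_hc (R : numDomainType) (d n h : nat) : Prop :=
  (0 < h)%N /\ colorful_helly R d n h /\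
  forall h', (0 < h')%N -> colorful_helly R d n h' -> (h <= h')%N.

Definition subfamily (R : numDomainType) (d N : nat) (F : 'I_N -> box R d)
  (S : {set 'I_N}) : family R d := fun B => exists2 i, i \in S & B = F i.

(* Main.v *)
Require Import Defs.
From HB Require Import structures.
From mathcomp Require Import all_boot all_order all_algebra.
From mathcomp Require Import boolp reals.
From mathcomp Require Import zify ring lra.
From Stdlib Require Import Lia.
Import Order.TTheory GRing.Theory Num.Theory.
Set Implicit Arguments. Unset Strict Implicit. Unset Printing Implicit Defensive.

Definition img (N j : nat) (t : {ffun 'I_j -> 'I_N}) : {set 'I_N} := [set t l | l : 'I_j].

Definition mixCH (N j : nat) (P : {set 'I_N} -> bool) (Q : pred {ffun 'I_j -> 'I_N}) :=
  forall X : 'I_j -> {set 'I_N},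
    (forall t : {ffun 'I_j -> 'I_N}, (forall l, t l \in X l) -> Q t) -> exists l, P (X l).

Definition ext (N j : nat) (S : {ffun 'I_j -> 'I_N}) (v : 'I_N) : {ffun 'I_j.+1 -> 'I_N} :=
  [ffun i => if unlift ord_max i is Some i' then S i' else v].
Definition restr (N j : nat) (t : {ffun 'I_j.+1 -> 'I_N}) : {ffun 'I_j -> 'I_N} :=
  [ffun i => t (lift ord_max i)].

Lemma restr_ext N j (S : {ffun 'I_j -> 'I_N}) v : restr (ext S v) = S.
Proof. by apply/ffunP => i; rewrite !ffunE liftK. Qed.
Lemma ext_max N j (S : {ffun 'I_j -> 'I_N}) v : ext S v ord_max = v.
Proof. by rewrite ffunE unlift_none. Qed.
Lemma ext_lift N j (S : {ffun 'I_j -> 'I_N}) v i : ext S v (lift ord_max i) = S i.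
Proof. by rewrite ffunE liftK. Qed.
Lemma ext_restr N j (t : {ffun 'I_j.+1 -> 'I_N}) : ext (restr t) (t ord_max) = t.
Proof.
apply/ffunP => i; rewrite ffunE; case: unliftP => [i' ->|->] //.
by rewrite ffunE.
Qed.


Lemma count_ext N j (Q : pred {ffun 'I_j.+1 -> 'I_N}) :
  #|[set t | Q t]| = \sum_(S : {ffun 'I_j -> 'I_N}) #|[set v | Q (ext S v)]|.
Proof.
rewrite -sum1dep_card.
rewrite (eq_bigr (fun S => \sum_v (if Q (ext S v) then 1 else 0))); last first.
  by move=> S _; rewrite -sum1dep_card big_mkcond.
rewrite big_mkcond /= pair_big /=.
rewrite (reindex (fun p : {ffun 'I_j -> 'I_N} * 'I_N => ext p.1 p.2)) /=.
  by apply: eq_bigl => p.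
exists (fun t => (restr t, t ord_max)) => [p _|t _] /=.
  by rewrite restr_ext ext_max; case: p.
by rewrite ext_restr.
Qed.

Lemma helly N k (P : {set 'I_N} -> bool) :
  mixCH P (fun t : {ffun 'I_k -> 'I_N} => P (img t)) ->
  forall W, ~~ P W -> exists x : {ffun 'I_k -> 'I_N}, (forall l, x l \in W) /\ ~~ P (img x).
Proof.
move=> CH W nPW; apply/not_existsP => H.
have [|l Pl] := CH (fun _ => W); last by rewrite Pl in nPW.
move=> t Ht; apply/negPn/negP => nP; apply: (H t); split => //.
Qed.

Lemma greedy N k (P : {set 'I_N} -> bool) (V : {set 'I_N}) :
  mixCH P (fun t : {ffun 'I_k -> 'I_N} => P (img t)) ->
  forall t : nat, (exists W : {set 'I_N}, W \subset V /\ P W /\ (#|V| <= #|W| + k * t)%N) \/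
   (exists E : nat -> {set 'I_N},
      (forall i j, (i < t)%N -> (j < t)%N -> i <> j -> [disjoint E i & E j]) /\
      (forall i, (i < t)%N -> E i \subset V /\ ~~ P (E i)) /\
      (#|\bigcup_(i < t) E i| <= k * t)%N).
Proof.
move=> CH t; elim: t => [|t IH].
- right; exists (fun _ => set0); split=> //; split=> //.
  by rewrite big_ord0 cards0.
case: IH => [[W [sW [PW hW]]]|[E [dE [sE cE]]]].
  left; exists W; split=> //; split=> //; rewrite mulnS; lia.
move Ue: (\bigcup_(i < t) E i) => U; rewrite Ue in cE.
have cW : (#|V| <= #|V :\: U| + k * t)%N.
  have h1 := cardsD V U.
  have h2 : (#|V :&: U| <= #|U|)%N by apply: subset_leq_card; apply: subsetIr.
  move: h1 h2 cE; move: (#|V :\: U|) (#|V :&: U|) (#|U|) (#|V|) (k * t) => a b c e f; lia.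
case PW: (P (V :\: U)).
  left; exists (V :\: U); split; first exact: subsetDl.
  by split=> //; rewrite mulnS; lia.
have [x [xW nPx]] := helly CH (negbT PW).
right; exists (fun i => if i == t then img x else E i); split; [|split].
- have dx : forall i, (i < t)%N -> [disjoint img x & E i].
    move=> i it; rewrite disjoint_subset; apply/subsetP => y /imsetP[l _ ->].
    rewrite inE; apply/negP => yE; have := xW l; rewrite inE -Ue => /andP[+ _].
    by move/negP; apply; apply: (subsetP (bigcup_sup (Ordinal it) (erefl true))).
  move=> i j; rewrite ltnS leq_eqVlt => /orP[/eqP->|it];
    rewrite ltnS leq_eqVlt => /orP[/eqP->|jt] ij.
  + by case: ij.
  + by rewrite eqxx (ltn_eqF jt); apply: dx.
  + by rewrite eqxx (ltn_eqF it) disjoint_sym; apply: dx.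
  + by rewrite (ltn_eqF it) (ltn_eqF jt); apply: dE.
- move=> i; rewrite ltnS leq_eqVlt => /orP[/eqP->|it]; first rewrite eqxx.
    split=> //; apply/subsetP => y /imsetP[l _ ->]; by have := xW l; rewrite inE => /andP[].
  by rewrite (ltn_eqF it); apply: sE.
- rewrite big_ord_recr /= eqxx.
  rewrite (eq_bigr (fun i : 'I_t => E i)); last by move=> i _; rewrite (ltn_eqF (ltn_ord i)).
  rewrite cardsU mulnS.
  have : (#|img x| <= k)%N by rewrite /img; apply: leq_trans (leq_imset_card _ _) _; rewrite card_ord.
  rewrite Ue; move: cE; move: (#|img x|) (#|U|) (#|U :&: img x|) (k * t) => a b c e; lia.
Qed.

Definition badset N k (P : {set 'I_N} -> bool) (V : {set 'I_N}) :=
  [set A : {ffun 'I_k -> 'I_N} | [forall l, A l \in V] && ~~ P (img A)].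

Lemma count_disj N k (P : {set 'I_N} -> bool) (V : {set 'I_N}) mu (E : nat -> {set 'I_N}) :
  mixCH P (fun t : {ffun 'I_k -> 'I_N} => P (img t)) ->
  (forall i j, (i < mu)%N -> (j < mu)%N -> i <> j -> [disjoint E i & E j]) ->
  (forall i, (i < mu)%N -> E i \subset V /\ ~~ P (E i)) ->
  (mu ^ k <= #|badset k P V|)%N.
Proof.
move=> CH dE sE.
have ex : forall io : {ffun 'I_k -> 'I_mu}, exists x : {ffun 'I_k -> 'I_N},
    (forall l, x l \in E (io l)) /\ ~~ P (img x).
  move=> io; apply/not_existsP => H.
  have [|l Pl] := CH (fun l => E (io l)).
    move=> t Ht; apply/negPn/negP => nP; apply: (H t); split => //.
  by have := (sE _ (ltn_ord (io l))).2; rewrite Pl.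
have [f fP] := choice ex.
have finj : injective f.
  move=> i1 i2 e; apply/ffunP => l.
  have h1 := (fP i1).1 l; have h2 := (fP i2).1 l; rewrite e in h1.
  apply/val_inj/eqP; apply/negPn/negP => ne.
  have := dE _ _ (ltn_ord (i1 l)) (ltn_ord (i2 l)) (fun q => negP ne (introT eqP q)).
  by move/disjointFr => /(_ _ h1); rewrite h2.
have -> : (mu ^ k = #|[set f i | i in [set: {ffun 'I_k -> 'I_mu}]]|)%N.
  by rewrite card_in_imset ?cardsT ?card_ffun ?card_ord //; move=> a b _ _; apply: finj.
apply: subset_leq_card; apply/subsetP => y /imsetP[i _ ->].
rewrite inE (fP i).2 andbT; apply/forallP => l.
have := (sE _ (ltn_ord (i l))).1 => /subsetP; apply; exact: (fP i).1 l.
Qed.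

Lemma endgame N k (P : {set 'I_N} -> bool) (V : {set 'I_N}) :
  (0 < k)%N -> mixCH P (fun t : {ffun 'I_k -> 'I_N} => P (img t)) ->
  (4 * k <= #|V|)%N -> (2 * (4 * k) ^ k * #|badset k P V| <= #|V| ^ k)%N ->
  exists W : {set 'I_N}, W \subset V /\ P W /\ (#|V| <= 2 * #|W|)%N.
Proof.
move=> k0 CH V4 Vb.
set mu := (#|V| %/ (2 * k))%N.
have h1 : (mu * (2 * k) <= #|V|)%N by apply: leq_divM.
have h2 : (#|V| < mu.+1 * (2 * k))%N by apply: ltn_ceil; lia.
case: (greedy V CH mu) => [[W [sW [PW hW]]]|[E [dE [sE cE]]]].
  exists W; split=> //; split=> //.
  move: h1 hW; rewrite (mulnC mu) -mulnA; move: (k * mu)%N => km; lia.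
have c := count_disj CH dE sE.
have h3 : (#|V| <= 4 * k * mu)%N.
  move: h2 V4; rewrite mulSn (mulnC mu) -!mulnA; move: (k * mu)%N => km; lia.
have h4 : (#|V| ^ k <= (4 * k) ^ k * mu ^ k)%N.
  by rewrite -expnMn leq_exp2r.
have h5 : (0 < #|V| ^ k)%N by rewrite expn_gt0; apply/orP; left; lia.
have h6 : ((4 * k) ^ k * mu ^ k <= (4 * k) ^ k * #|badset k P V|)%N by rewrite leq_mul2l c orbT.
exfalso; move: h4 h5 h6 Vb; rewrite -mulnA.
move: (#|V| ^ k)%N ((4 * k) ^ k * mu ^ k)%N ((4 * k) ^ k * #|badset k P V|)%N => a b c'.
lia.
Qed.

Lemma sum_bad N j k (P : {set 'I_N} -> bool) (L : {ffun 'I_j -> 'I_N} -> {set 'I_N}) :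
  (\sum_(S : {ffun 'I_j -> 'I_N}) #|badset k P (L S)| =
  \sum_(A : {ffun 'I_k -> 'I_N} | ~~ P (img A)) #|[set S | [forall l, A l \in L S]]|)%N.
Proof.
rewrite (eq_bigr (fun S => \sum_(A : {ffun 'I_k -> 'I_N}) (if [forall l, A l \in L S] && ~~ P (img A) then 1 else 0)))%N; last first.
  by move=> S _; rewrite /badset -sum1dep_card big_mkcond.
rewrite exchange_big [RHS]big_mkcond /=; apply: eq_bigr => A _.
case: (P (img A)) => /=; last by rewrite -sum1dep_card [RHS]big_mkcond /=; apply: eq_bigr => S _; rewrite andbT.
by rewrite big1 // => S _; rewrite andbF.
Qed.

Local Open Scope ring_scope.

Lemma mixCH_link N j k (P : {set 'I_N} -> bool) (Q : pred {ffun 'I_j.+1 -> 'I_N})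
  (A : {ffun 'I_k -> 'I_N}) :
  mixCH P Q -> ~~ P (img A) ->
  mixCH P (fun S : {ffun 'I_j -> 'I_N} => [forall l, Q (ext S (A l))]).
Proof.
move=> mQ nPA X' HX.
have [|i Pi] := mQ (fun i => if unlift ord_max i is Some i' then X' i' else img A).
  move=> t Ht.
  have := Ht ord_max; rewrite unlift_none => /imsetP[l _ el].
  have := HX (restr t) => /(_ _)/forallP/(_ l).
  rewrite -el ext_restr; apply => i'; rewrite ffunE.
  by have := Ht (lift ord_max i'); rewrite liftK.
move: Pi; case: unliftP => [i' _ Pi|_ Pi]; first by exists i'.
by rewrite Pi in nPA.
Qed.

Lemma main_ind (R : realType) (k j : nat) : forall alpha : R, 0 < alpha ->
  exists beta : R, 0 < beta /\
  forall N (P : {set 'I_N} -> bool), (0 < k)%N -> P set0 -> (forall x, P [set x]) ->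
   mixCH P (fun t : {ffun 'I_k -> 'I_N} => P (img t)) ->
   forall Q : pred {ffun 'I_j -> 'I_N}, mixCH P Q ->
   alpha * (N ^ j)%:R <= #|[set t | Q t]|%:R ->
   exists S : {set 'I_N}, P S /\ beta * N%:R <= #|S|%:R.
Proof.
elim: j => [|j IH] alpha a0.
  exists 1; split => // N P k0 P0 P1 CH Q mQ dens; exfalso.
  have : (0 < #|[set t | Q t]|)%N.
    by rewrite expn0 mulr1 in dens; have := lt_le_trans a0 dens; rewrite ltr0n.
  case/card_gt0P => t; rewrite inE => Qt.
  have [|l _] := mQ (fun _ => set0); last by case: l.
  move=> t' _; suff -> : t' = t by [].
  by apply/ffunP => -[].
set gam := alpha / 2.
set c : R := (2 * (4 * k) ^ k)%N%:R.
set a' := gam ^+ k.+1 / (2 * c).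
have g0 : 0 < gam by rewrite /gam divr_gt0.
have c0 : 0 < c by rewrite /c ltr0n muln_gt0 expn_gt0 muln_gt0 /=; case: (k).
have a'0 : 0 < a' by apply: divr_gt0; [exact: exprn_gt0 | apply: mulr_gt0].
have [b' [b'0 Hb']] := IH a' a'0.
have q0 : 0 < gam / (4 * k).+1%:R by rewrite divr_gt0 // ltr0n.
exists (Num.min b' (gam / (4 * k).+1%:R)); split; first by rewrite lt_min b'0 q0.
set beta := Num.min _ _.
have bb' : beta <= b' by rewrite ge_min lexx.
have bq : beta <= gam / (4 * k).+1%:R by rewrite ge_min lexx orbT.
move=> N P k0 P0 P1 CH Q mQ dens.
case: (posnP N) => [N0|Npos].
  by exists set0; split => //; rewrite N0 mulr0 cards0.
case: (pselect (exists A : {ffun 'I_k -> 'I_N}, ~~ P (img A) /\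
   a' * (N ^ j)%:R <= #|[set S : {ffun 'I_j -> 'I_N} | [forall l, Q (ext S (A l))]]|%:R))
   => [[A [nPA dA]]|nA].
  have [S [PS HS]] := Hb' N P k0 P0 P1 CH _ (mixCH_link mQ nPA) dA.
  exists S; split => //; apply: le_trans HS; apply: ler_wpM2r bb'; exact: ler0n.
set M : R := N%:R.
have M0 : 0 < M by rewrite ltr0n.
pose L := fun S : {ffun 'I_j -> 'I_N} => [set v | Q (ext S v)].
have HA : forall A : {ffun 'I_k -> 'I_N}, ~~ P (img A) ->
    #|[set S | [forall l, A l \in L S]]|%:R <= a' * M ^+ j.
  move=> A nPA.
  have -> : [set S | [forall l, A l \in L S]] = [set S | [forall l, Q (ext S (A l))]].
    by apply/setP => S; rewrite !inE; apply: eq_forallb => l; rewrite inE.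
  rewrite /M -natrX; apply/ltW; rewrite ltNge; apply/negP => h.
  by apply: nA; exists A.
have sumB : (\sum_S #|badset k P (L S)|)%N%:R <= M ^+ k * (a' * M ^+ j).
  rewrite sum_bad natr_sum.
  apply: (@le_trans _ _ (\sum_(A : {ffun 'I_k -> 'I_N}) (a' * M ^+ j))).
    rewrite [X in X <= _]big_mkcond /=; apply: ler_sum => A _.
    case: ifP => nP; first exact: HA.
    by apply: mulr_ge0; [exact: ltW | apply: exprn_ge0; exact: ltW].
  rewrite sumr_const card_ffun !card_ord -mulr_natl natrX.
  done.
have [S [hS1 hS2]] : exists S, gam * M <= #|L S|%:R /\
    c * #|badset k P (L S)|%:R <= #|L S|%:R ^+ k.
  apply/not_existsP => H; exfalso.
  set G := (gam * M) ^+ k.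
  have G0 : 0 < G by apply: exprn_gt0; apply: mulr_gt0.
  have pw : forall S, #|L S|%:R <= gam * M + M * (c * #|badset k P (L S)|%:R / G).
    move=> S; have xM : #|L S|%:R <= M by rewrite ler_nat; have := max_card (L S); rewrite card_ord.
    have nn : 0 <= M * (c * #|badset k P (L S)|%:R / G).
      by apply: mulr_ge0; [exact: ltW | apply: divr_ge0; [apply: mulr_ge0; [exact: ltW|exact: ler0n] | exact: ltW]].
    case: (leP (gam * M) #|L S|%:R) => h; last first.
      by apply: le_trans (ltW h) _; rewrite lerDl.
    have h2 : #|L S|%:R ^+ k < c * #|badset k P (L S)|%:R.
      by rewrite ltNge; apply/negP => h3; apply: (H S).
    have h3 : G <= #|L S|%:R ^+ k.
      apply: lerXn2r; [rewrite nnegrE; apply: mulr_ge0; exact: ltW | by rewrite nnegrE ler0n | exact: h].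
    have h4 : 1 <= c * #|badset k P (L S)|%:R / G.
      by rewrite ler_pdivlMr // mul1r; apply: ltW; apply: le_lt_trans h3 h2.
    apply: (le_trans xM); apply: (@le_trans _ _ (M * (c * #|badset k P (L S)|%:R / G))).
      by rewrite -{1}(mulr1 M) ler_wpM2l //; exact: ltW.
    by rewrite lerDr; apply: mulr_ge0; exact: ltW.
  have tot : #|[set t | Q t]|%:R <= \sum_(S : {ffun 'I_j -> 'I_N}) (gam * M + M * (c * #|badset k P (L S)|%:R / G)).
    by rewrite count_ext natr_sum; apply: ler_sum => S _; apply: pw.
  rewrite big_split /= sumr_const card_ffun !card_ord in tot.
  have e : \sum_(S : {ffun 'I_j -> 'I_N}) M * (c * #|badset k P (L S)|%:R / G) =
      M * c / G * (\sum_S #|badset k P (L S)|)%N%:R.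
    rewrite natr_sum mulr_sumr; apply: eq_bigr => S _.
    by rewrite !mulrA mulrAC.
  rewrite e in tot.
  have tot2 : alpha * M ^+ j.+1 <= gam * M *+ (N ^ j) + M * c / G * (M ^+ k * (a' * M ^+ j)).
    apply: (le_trans _ (le_trans tot _)); first by rewrite /M -natrX.
    rewrite lerD2l; apply: ler_wpM2l sumB.
    by apply: divr_ge0; [apply: mulr_ge0; exact: ltW | exact: ltW].
  move: tot2; rewrite -mulr_natr natrX -/M /G /a' exprMn exprS (exprS gam).
  have Mk0 : M ^+ k != 0 by rewrite expf_neq0 // gt_eqF.
  have gk0 : gam ^+ k != 0 by rewrite expf_neq0 // gt_eqF.
  have c0' : c != 0 by rewrite gt_eqF.
  have -> : M * c / (gam ^+ k * M ^+ k) * (M ^+ k * (gam * gam ^+ k / (2 * c) * M ^+ j)) =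
            gam / 2 * (M * M ^+ j).
    field; rewrite Mk0 gk0 !andbT pnatr_eq0 -lt0n expn_gt0 muln_gt0 k0 /=; done.
  rewrite -(mulrA gam M) => hh.
  have XP : 0 < M * M ^+ j by apply: mulr_gt0 => //; exact: exprn_gt0.
  have aX : 0 < alpha * (M * M ^+ j) by apply: mulr_gt0.
  move: hh XP aX; move: (M * M ^+ j) => X; rewrite /gam => hh XP aX.
  lra.
set q := gam / (4 * k).+1%:R.
set r : R := (4 * k).+1%:R.
have r0 : 0 < r by rewrite ltr0n.
have qr : r * (q * M) = gam * M by rewrite /q mulrA [r * _]mulrC divfK // gt_eqF.
have bM : beta * M <= q * M by apply: ler_wpM2r bq; exact: ltW.
have qM0 : 0 <= q * M by apply: mulr_ge0; exact: ltW.
case: (leqP (4 * k) #|L S|) => V4.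
  have hS2' : (2 * (4 * k) ^ k * #|badset k P (L S)| <= #|L S| ^ k)%N.
    by rewrite -(ler_nat R) natrM natrX.
  have [W [sW [PW hW]]] := endgame k0 CH V4 hS2'.
  exists W; split => //.
  have r2 : 2 <= r by rewrite /r ler_nat ltnS muln_gt0 k0.
  have h2 : 2 * (q * M) <= r * (q * M) by apply: ler_wpM2r.
  have hW' : #|L S|%:R <= 2 * #|W|%:R :> R by rewrite -natrM ler_nat.
  move: h2 qr hS1 hW' bM; move: (q * M) (r * (q * M)) => Y rY.
  move=> *; lra.
exists [set Ordinal Npos]; split; first exact: P1.
rewrite cards1.
have h4 : #|L S|%:R + 1 <= r by rewrite /r -natr1 lerD2r ler_nat; exact: ltnW.
have h5 : r * (q * M) <= r * 1.
  by rewrite mulr1 qr; apply: le_trans h4; apply: le_trans hS1 _; rewrite lerDl.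
rewrite ler_pM2l // in h5.
exact: le_trans bM h5.
Qed.

Lemma pierce_sub (R : realType) d n (F G : Defs.family R d) :
  (forall B, G B -> F B) -> pierceable n F -> pierceable n G.
Proof. by move=> sGF [p Hp]; exists p => B /sGF; apply: Hp. Qed.

Lemma CH_of_colorful (R : realType) d n h N (F : 'I_N -> box R d) :
  colorful_helly R d n h ->
  mixCH (fun S => `[< pierceable n (subfamily F S) >])
        (fun t : {ffun 'I_h -> 'I_N} => `[< pierceable n (subfamily F (img t)) >]).
Proof.
move=> CHc X HX.
have [|l Pl] := CHc (fun l => subfamily F (X l)); last by exists l; apply/asboolP.
move=> C [idx [inj Hc]].
have ex : forall j, exists i, i \in X (idx j) /\ C j = F i.
  by move=> j; case: (Hc j) => i iX e; exists i.
have [g gP] := choice ex.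
pose t := [ffun l => g (invF inj l)].
have tX : forall l, t l \in X l.
  by move=> l; rewrite ffunE; have := (gP (invF inj l)).1; rewrite f_invF.
have := HX t tX => /asboolP; apply: pierce_sub => B [j ->].
exists (t (idx j)); first by apply: imset_f.
by rewrite ffunE invF_f; exact: (gP j).2.
Qed.

Lemma pierce_set0 (R : realType) d n N (F : 'I_N -> box R d) :
  pierceable n (subfamily F set0).
Proof. by exists (fun _ _ => 0) => B [i]; rewrite inE. Qed.

Lemma pierce_set1 (R : realType) d n N (F : 'I_N -> box R d) x :
  (0 < n)%N -> pierceable n (subfamily F [set x]).
Proof.
move=> n0; exists (fun _ => lo (F x)) => B [i]; rewrite inE => /eqP -> ->.
by exists (Ordinal n0) => j; rewrite lexx box_ok.
Qed.

Lemma not_pierce0 (R : realType) d N (F : 'I_N -> box R d) (S : {set 'I_N}) i :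
  i \in S -> ~ pierceable 0 (subfamily F S).
Proof.
move=> iS [p Hp]; case: (Hp (F i) (ex_intro2 _ _ i iS erefl)) => -[m lt] _.
by rewrite ltn0 in lt.
Qed.

Lemma helly01 (R : realType) d : colorful_helly R d 0 1.
Proof.
move=> Fm HC; exists ord0; exists (fun _ _ => 0).
move=> B FB; exfalso.
have col : colorful Fm (fun _ : 'I_1 => B).
  by exists id; split => // j; rewrite (ord1 j).
have [p Hp] := HC _ col.
by case: (Hp B (ex_intro _ ord0 erefl)) => -[m lt] _; rewrite ltn0 in lt.
Qed.

Lemma tup_img N h (x0 : 'I_N) (S : {set 'I_N}) : #|S| = h ->
  img ([ffun i : 'I_h => nth x0 (enum S) i]) = S.
Proof.
move=> cS; apply/setP => x; apply/imsetP/idP => [[i _ ->]|xS].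
  rewrite ffunE -mem_enum; apply: mem_nth; rewrite -cardE cS; exact: ltn_ord.
have hi : (index x (enum S) < h)%N by rewrite -cS cardE index_mem mem_enum.
by exists (Ordinal hi) => //; rewrite ffunE nth_index // mem_enum.
Qed.

Lemma count_tup (N h : nat) (x0 : 'I_N) (P : {set 'I_N} -> bool) :
  (#|[set S : {set 'I_N} | (#|S| == h) && P S]| <= #|[set t : {ffun 'I_h -> 'I_N} | P (img t)]|)%N.
Proof.
pose tup := fun S : {set 'I_N} => ([ffun i : 'I_h => nth x0 (enum S) i] : {ffun 'I_h -> 'I_N}).
rewrite -(card_in_imset (f := tup)); last first.
  move=> S1 S2; rewrite !inE => /andP[/eqP c1 _] /andP[/eqP c2 _] e.
  by have := congr1 (@img N h) e; rewrite /tup (tup_img x0 c1) (tup_img x0 c2).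
apply: subset_leq_card; apply/subsetP => t /imsetP[S]; rewrite inE => /andP[/eqP cS PS] ->.
by rewrite inE tup_img.
Qed.

Lemma ffact_ge N h : ((N - h) ^ h <= N ^_ h)%N.
Proof.
elim: h N => [|h IH] N; first by rewrite ffactn0.
rewrite ffactnS expnS.
have -> : (N - h.+1 = N.-1 - h)%N by lia.
apply: leq_mul; first by lia.
apply: leq_trans (IH N.-1); case: (posnP h) => [->|hp]; first by rewrite !expn0.
by rewrite leq_exp2r.
Qed.

Lemma binom_lb N h : (2 * h <= N)%N -> (N ^ h <= 2 ^ h * h`! * 'C(N, h))%N.
Proof.
move=> hN; rewrite -mulnA (mulnC h`!) bin_ffact.
apply: leq_trans (leq_mul (leqnn (2 ^ h)) (ffact_ge N h)).
rewrite -expnMn; case: (posnP h) => [->|hp]; first by rewrite !expn0.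
by rewrite leq_exp2r //; lia.
Qed.

Unset Implicit Arguments.
Set Strict Implicit.

Theorem theorem6 (R : realType) (h : nat) (alpha : R) :
  0 < alpha < 1 ->
  exists beta : R, 0 < beta < 1 /\
    forall (d n : nat), is_hc R d n h ->
    forall (N : nat) (F : 'I_N -> box R d),
      #|[set S : {set 'I_N} | (#|S| == h) &&
          `[< pierceable n (subfamily F S) >]]|%:R >= alpha * 'C(N, h)%:R ->
      exists S : {set 'I_N}, #|S|%:R >= beta * N%:R /\ pierceable n (subfamily F S).
Proof.
move=> /andP[a0 a1].
set D : R := (2 ^ h * h`!)%N%:R.
have D0 : 0 < D by rewrite ltr0n muln_gt0 expn_gt0 fact_gt0.
have at0 : 0 < alpha / D by rewrite divr_gt0.
have [b [b0 Hb]] := main_ind h h at0.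
set e : R := (2 * h + 2)%N%:R^-1.
have e0 : 0 < e by rewrite /e invr_gt0 ltr0n addn2.
have e1 : e < 1 by rewrite /e invf_lt1; [rewrite ltr1n addn2 | rewrite ltr0n addn2].
exists (Num.min b e); split.
  by rewrite lt_min b0 e0 /= gt_min e1 orbT.
move=> d n [h0 [CHc minh]] N F dens.
have be : Num.min b e <= e by rewrite ge_min lexx orbT.
have bb : Num.min b e <= b by rewrite ge_min lexx.
case: (posnP N) => [N0|Npos].
  by exists set0; split; [rewrite N0 mulr0 cards0 | exact: pierce_set0].
case: (posnP n) => [n0|npos].
  exfalso; subst n.
  have h1 : (h <= 1)%N by apply: minh => //; exact: helly01.
  have cnt0 : #|[set S : {set 'I_N} | (#|S| == h) && `[< pierceable 0 (subfamily F S) >]]| = 0%N.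
    apply: eq_card0 => S; rewrite inE; apply/negP => /andP[/eqP cS /asboolP pS].
    have : (0 < #|S|)%N by rewrite cS.
    by case/card_gt0P => i iS; apply: (not_pierce0 iS pS).
  rewrite cnt0 in dens.
  have : 'C(N, h) = 0%N.
    apply/eqP; rewrite -(pnatr_eq0 R); apply/eqP; apply: le_anti; rewrite ler0n andbT.
    by rewrite -(ler_pM2l a0) mulr0.
  move=> C0; have : (h <= N)%N by lia.
  by rewrite -bin_gt0 C0.
case: (ltnP N (2 * h)) => hN.
  exists [set Ordinal Npos]; split; last exact: pierce_set1.
  rewrite cards1; apply: le_trans (_ : e * N%:R <= 1).
    by apply: ler_wpM2r => //; exact: ler0n.
  rewrite /e mulrC ler_pdivrMr ?ltr0n ?addn2 // mul1r ler_nat -addn2; lia.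
set P := fun S : {set 'I_N} => `[< pierceable n (subfamily F S) >].
have CH := CH_of_colorful (F := F) CHc.
have dens' : alpha / D * (N ^ h)%:R <= #|[set t : {ffun 'I_h -> 'I_N} | P (img t)]|%:R.
  apply: le_trans (_ : alpha * 'C(N, h)%:R <= _); last first.
    apply: le_trans dens _; rewrite ler_nat; exact: count_tup (Ordinal Npos) P.
  rewrite -mulrA ler_wpM2l //; first exact: ltW.
  rewrite ler_pdivrMl // mulrC /D -natrM ler_nat mulnC; exact: binom_lb.
have [S [PS HS]] := Hb N P h0 (asboolT (pierce_set0 n F)) (fun x => asboolT (pierce_set1 F x npos))
   CH _ CH dens'.
exists S; split; last by move/asboolP: PS.
apply: le_trans HS; apply: ler_wpM2r bb; exact: ler0n.
Qed.
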